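(* Let $a,b>0$ with $a\neq2b$, $\eta\in(0,1]$, $T>0$ and $0<\tau\le T$. For two independent photons each in the double-exponential state $(a,b)$, each detected by a detector of efficiency $\eta$, define the coincidence probability $$p_{\mathrm{ph\text{-}ph}}(T,\tau)=\iint_{|t_1-t_2|\le\tau}p_T(t_1)\,p_T(t_2)\,dt_1\,dt_2 .$$ Then $$p_{\mathrm{ph\text{-}ph}}(T,\tau)\left(\frac{p_{\mathrm{det}}(T)}{\eta}\right)^2=\frac{a^2}{a^2-4b^2}(1-e^{-2b\tau})-\frac{4b^2}{a^2-4b^2}(1-e^{-a\tau})+\frac{a^2}{(a-2b)^2}(1-e^{2b\tau})e^{-4bT}+\frac{4b^2}{(a-2b)^2}(1-e^{a\tau})e^{-2aT}-\frac{4ab}{(a-2b)^2}\left(1-\frac{ae^{2b\tau}+2be^{a\tau}}{a+2b}\right)e^{-(a+2b)T}.$$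
   Context: $\Theta$ is the Heaviside step function. The double-exponential photon state $(a,b)$ is the mixture over emission times $t_0$ with density $p_{\mathrm{em}}(t_0)=ae^{-at_0}\Theta(t_0)$ of pure photons with temporal wave function $\psi_{t_0}(t)=\sqrt{2b}\,e^{-b(t-t_0)}\Theta(t-t_0)$. The detection-time density is $p(t)=\eta\int_0^\infty p_{\mathrm{em}}(t_0)|\psi_{t_0}(t)|^2dt_0$, the probability of detection within the detection time window $[0,T]$ is $p_{\mathrm{det}}(T)=\int_0^Tp(t)\,dt$, and the detection-time density conditioned on detection within $[0,T]$ is $p_T(t)=\Theta(t)\Theta(T-t)p(t)/p_{\mathrm{det}}(T)$. $\tau$ is the coincidence time window. *)

(* Defs.v *)
From HB Require Import structures.
From mathcomp Require Import all_boot all_order all_algebra.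
From mathcomp Require Import all_classical all_reals all_analysis.
Set Implicit Arguments. Unset Strict Implicit. Unset Printing Implicit Defensive.
Import Order.TTheory GRing.Theory Num.Theory.
Local Open Scope classical_set_scope.
Local Open Scope ring_scope.

Section Photon.
Variable R : realType.

(* Heaviside step function (value at 0 is immaterial: measure zero). *)
Definition heaviside (x : R) : R := if 0 <= x then 1 else 0.

Definition p_em (a t0 : R) : R := a * expR (- a * t0) * heaviside t0.

Definition psi (b t0 t : R) : R :=
  Num.sqrt (2 * b) * expR (- b * (t - t0)) * heaviside (t - t0).

(* detection-time density p(t) = η ∫_0^∞ p_em(t0) |psi_{t0}(t)|^2 dt0
   (the restriction to t0 >= 0 is carried by the Heaviside factor in p_em) *)
Definition p_dens (a b eta t : R) : R :=
  eta * Rintegral (@lebesgue_measure R) setT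
          (fun t0 => p_em a t0 * (psi b t0 t) ^+ 2).

Definition p_det (a b eta T : R) : R :=
  Rintegral (@lebesgue_measure R) `[0, T] (p_dens a b eta).

Definition p_cond (a b eta T t : R) : R :=
  heaviside t * heaviside (T - t) * p_dens a b eta t / p_det a b eta T.

(* p_{ph-ph}(T,τ) = ∬_{|t1-t2| <= τ} p_T(t1) p_T(t2) dt1 dt2
   (written as an iterated Lebesgue integral of a nonnegative integrand) *)
Definition p_phph (a b eta T tau : R) : R :=
  Rintegral (@lebesgue_measure R) setT (fun t1 =>
    Rintegral (@lebesgue_measure R) setT (fun t2 =>
      (if `|t1 - t2| <= tau then 1 else 0) *
      p_cond a b eta T t1 * p_cond a b eta T t2)).

End Photon.

(* Main.v *)
Require Import Defs.
From HB Require Import structures.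
From mathcomp Require Import all_boot all_order all_algebra.
From mathcomp Require Import all_classical all_reals all_analysis.
From mathcomp Require Import ring lra.
Import Order.TTheory GRing.Theory Num.Theory.
Import numFieldNormedType.Exports.
Local Open Scope classical_set_scope.
Local Open Scope ring_scope.
Section S.
Variable R : realType.
Lemma ftc_gen (f F : R^o -> R^o) (u v : R) : u <= v -> continuous f ->
  (forall x : R, is_derive x (1:R) F (f x)) ->
  (\int[lebesgue_measure]_(x in `[u,v]) (f x)%:E = (F v - F u)%:E)%E.
Proof.
rewrite le_eqVlt => /orP[/eqP <-|uv] cf dF.
  by rewrite set_itv1 integral_set1 subrr.
have Fc : forall x, {for x, continuous F}.
  move=> x; apply: differentiable_continuous; apply/derivable1_diffP.
  by have [] := dF x.
rewrite (@continuous_FTC2 _ f F u v uv) ?EFinB //.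
- exact: continuous_subspaceT.
- split.
  + by move=> x _; have [] := dF x.
  + exact: cvg_at_right_filter (Fc u).
  + exact: cvg_at_left_filter (Fc v).
- by move=> x _; rewrite derive1E; have [_ ->] := dF x.
Qed.
Lemma der_exp1 (c k x : R) :
  is_derive x (1:R) (fun t : R^o => c * expR (k * t) : R^o) (c * k * expR (k * x)).
Proof.
have hk : is_derive x (1:R) (fun t : R^o => k * t : R^o) k.
  by apply: is_derive_eq; rewrite /GRing.scale/= mulr1.
have he := is_derive1_comp (is_derive_expR (k * x)) hk.
have := is_deriveZ c he.
have -> : c *: (expR (k * x) * k) = c * k * expR (k * x) by rewrite /GRing.scale/=; ring.
done.
Qed.
Definition lc (s : seq (R * R)) (t : R) : R := \sum_(p <- s) p.1 * expR (p.2 * t).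
Definition lcI (s : seq (R * R)) (t : R) : R := \sum_(p <- s) p.1 / p.2 * expR (p.2 * t).

Lemma lc_der s x : is_derive x (1:R) (lc s : R^o -> R^o) (\sum_(p <- s) p.1 * p.2 * expR (p.2 * x)).
Proof.
elim: s => [|p s IH].
  rewrite big_nil.
  have -> : lc [::] = fun=> 0 by apply: funext => t; rewrite /lc big_nil.
  exact: is_derive_cst.
have -> : lc (p :: s) = (fun t : R^o => p.1 * expR (p.2 * t) : R^o) + lc s.
  by apply: funext => t; rewrite /lc big_cons.
rewrite big_cons; exact: is_deriveD (der_exp1 _ _ _) IH.
Qed.

Lemma lc_cont s : continuous (lc s : R^o -> R^o).
Proof.
move=> x; apply: differentiable_continuous; apply/derivable1_diffP.
by have [] := lc_der s x.
Qed.

Lemma lcI_der x s : all (fun p => p.2 != 0) s -> is_derive x (1:R) (lcI s : R^o -> R^o) (lc s x).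
Proof.
move=> hs.
have -> : lcI s = lc [seq (p.1 / p.2, p.2) | p <- s].
  by apply: funext => t; rewrite /lc /lcI big_map.
have -> : lc s x = \sum_(p <- [seq (p.1 / p.2, p.2) | p <- s]) p.1 * p.2 * expR (p.2 * x).
  rewrite big_map /lc; apply: eq_big_seq => p ps /=.
  by rewrite divfK //; move/allP: hs => /(_ p ps).
exact: lc_der.
Qed.

Lemma int_lc u v s : u <= v -> all (fun p => p.2 != 0) s ->
  Rintegral (@lebesgue_measure R) `[u, v] (lc s) = lcI s v - lcI s u.
Proof.
move=> uv hs; rewrite /Rintegral.
have h := @ftc_gen (lc s) (lcI s) u v uv (lc_cont s) (fun x => @lcI_der x s hs).
by rewrite h.
Qed.
Lemma Rint_mkcond (D : set R) (h h' : R -> R) :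
  (forall x, h x = if x \in D then h' x else 0) ->
  Rintegral (@lebesgue_measure R) setT h = Rintegral (@lebesgue_measure R) D h'.
Proof.
move=> hh; rewrite /Rintegral. rewrite (@integral_mkcond _ _ _ (@lebesgue_measure R) D (fun x => (h' x)%:E)). congr fine; congr integral; apply: funext => x.
by rewrite /patch hh; case: ifP.
Qed.

Lemma cont_int (f : R -> R) u v : continuous (f : R^o -> R^o) ->
  (@lebesgue_measure R).-integrable `[u, v] (EFin \o f).
Proof.
move=> cf; apply: continuous_compact_integrable; first exact: segment_compact.
exact: continuous_subspaceT.
Qed.

Lemma Rint_sub (A : set R) (f : R -> R) u v : measurable A -> A `<=` `[u, v] ->
  continuous (f : R^o -> R^o) ->
  (@lebesgue_measure R).-integrable A (EFin \o f).
Proof.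
move=> mA sA cf.
apply: (@integrableS _ _ _ (@lebesgue_measure R) `[u, v]%classic) => //.
exact: cont_int.
Qed.
Definition cc (a b : R) := 2 * a * b / (2 * b - a).
Definition sg (a b : R) : seq (R * R) := [:: (cc a b, - a); (- cc a b, - (2 * b))].

Lemma expR_neq0 (x : R) : expR x != 0.
Proof. by rewrite gt_eqF ?expR_gt0. Qed.

Lemma p_dens_eq (a b eta t : R) : 0 < a -> 0 < b -> a != 2 * b -> 0 <= t ->
  p_dens a b eta t = eta * lc (sg a b) t.
Proof.
move=> ha hb hab ht; rewrite /p_dens; congr (_ * _).
have hk : 2 * b - a != 0 by rewrite subr_eq0 eq_sym.
rewrite (@Rint_mkcond `[0, t] _ (lc [:: (2 * a * b * expR (- (2 * b) * t), 2 * b - a)])).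
  rewrite int_lc //=; last by rewrite andbT.
  rewrite /lcI /lc !big_cons !big_nil /= mulr0 expR0.
  have E : expR ((2 * b - a) * t) = expR (- a * t) / expR (- (2 * b) * t).
    by rewrite -expRN -expRD; congr expR; ring.
  rewrite E /cc; field; rewrite hk expR_neq0 //.
move=> x; rewrite /p_em /psi /heaviside /= subr_ge0 mem_setE in_itv /=.
have [x0|x0] := leP 0 x; have [xt|xt] := leP x t; rewrite /=; try by rewrite ?mulr0 ?mul0r ?expr2 ?mulr0 ?mul0r.
rewrite /lc !big_cons big_nil addr0 !mulr1 exprMn sqr_sqrtr; last by rewrite mulr_ge0 // ltW.
have E : expR (- a * x) * expR (- b * (t - x)) ^+ 2 = expR (- (2 * b) * t) * expR ((2 * b - a) * x).
  by rewrite expr2 -!expRD; congr expR; ring.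
transitivity (a * (2 * b) * (expR (- a * x) * expR (- b * (t - x)) ^+ 2)); first by ring.
by rewrite E /=; ring.
Qed.

Lemma eqRL (D : set R) (f g : R -> R) : {in D, f =1 g} ->
  Rintegral (@lebesgue_measure R) D f = Rintegral (@lebesgue_measure R) D g.
Proof. by move=> h; rewrite /Rintegral; congr fine; apply: eq_integral => x /h ->. Qed.

Lemma RZl (D : set R) (f : R -> R) (r : R) : measurable D ->
  (@lebesgue_measure R).-integrable D (EFin \o f) ->
  Rintegral (@lebesgue_measure R) D (fun x => r * f x) = r * Rintegral (@lebesgue_measure R) D f.
Proof. by move=> mD hf; rewrite RintegralZl. Qed.

Lemma RB (D : set R) (f g : R -> R) : measurable D ->
  (@lebesgue_measure R).-integrable D (EFin \o f) ->
  (@lebesgue_measure R).-integrable D (EFin \o g) ->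
  Rintegral (@lebesgue_measure R) D (fun x => f x - g x) =
  Rintegral (@lebesgue_measure R) D f - Rintegral (@lebesgue_measure R) D g.
Proof. by move=> mD hf hg; rewrite RintegralB. Qed.

Lemma sg_ne0 (a b : R) : 0 < a -> 0 < b -> all (fun p : R * R => p.2 != 0) (sg a b).
Proof.
move=> ha hb; rewrite /sg /= !oppr_eq0 (gt_eqF ha) /=.
by rewrite mulf_neq0 // gt_eqF.
Qed.

Lemma p_det_eq (a b eta T : R) : 0 < a -> 0 < b -> a != 2 * b -> 0 <= T ->
  p_det a b eta T = eta * (lcI (sg a b) T - lcI (sg a b) 0).
Proof.
move=> ha hb hab hT; rewrite /p_det.
rewrite (@eqRL _ _ (fun t => eta * lc (sg a b) t)); last first.
  move=> t; rewrite in_setE /= in_itv /= => /andP[t0 _]; exact: p_dens_eq.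
rewrite RZl; last 2 first.
- exact: measurable_itv.
- exact/cont_int/lc_cont.
by rewrite int_lc ?sg_ne0.
Qed.

Lemma FT_gt0 (a b T : R) : 0 < a -> 0 < b -> a != 2 * b -> 0 < T ->
  0 < lcI (sg a b) T - lcI (sg a b) 0.
Proof.
move=> ha hb hab hT.
have hd : forall x, is_derive x (1:R) (lcI (sg a b) : R^o -> R^o) (lc (sg a b) x).
  by move=> x; apply: lcI_der; apply: sg_ne0.
have hc : {within `[0, T], continuous (lcI (sg a b) : R^o -> R^o)}.
  apply: continuous_subspaceT => x; apply: differentiable_continuous; apply/derivable1_diffP.
  by have [] := hd x.
have [xi xin ->] := @MVT _ (lcI (sg a b)) (lc (sg a b)) 0 T hT (fun x _ => hd x) hc.
  rewrite subr0 pmulr_lgt0 //.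
  move: xin; rewrite in_itv /= => /andP[x0 _].
  rewrite /lc /sg /cc !big_cons big_nil /= addr0.
  rewrite (_ : _ + _ = 2 * a * b * ((expR (- a * xi) - expR (- (2 * b) * xi)) / (2 * b - a))); last by ring.
  apply: mulr_gt0; first by rewrite !mulr_gt0.
  have [h|h|h] := ltgtP a (2 * b).
  - apply: divr_gt0; rewrite subr_gt0 // ltr_expR; nra.
  - rewrite -[X in X / _]opprB -[X in _ / X]opprB invrN mulrNN.
    apply: divr_gt0; rewrite subr_gt0 // ltr_expR; nra.
  - by move: hab; rewrite h eqxx.
Qed.
Definition FT (a b T : R) := lcI (sg a b) T - lcI (sg a b) 0.

Lemma Rint0 (D : set R) : Rintegral (@lebesgue_measure R) D (fun _ => 0) = 0.
Proof. by rewrite /Rintegral integral0. Qed.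

Lemma p_cond_eq (a b eta T t : R) : 0 < a -> 0 < b -> a != 2 * b -> 0 < eta -> 0 < T ->
  p_cond a b eta T t = if t \in `[0, T]%classic then lc (sg a b) t / FT a b T else 0.
Proof.
move=> ha hb hab he hT; rewrite /p_cond /heaviside mem_setE in_itv /= subr_ge0.
have [t0|t0] := leP 0 t; have [tT|tT] := leP t T; rewrite /= ?mulr0 ?mul0r //.
rewrite p_dens_eq // p_det_eq ?(ltW hT) // !mul1r.
have hF := @FT_gt0 a b T ha hb hab hT.
rewrite /FT in hF *; field; rewrite (gt_eqF hF) (gt_eqF he) //.
Qed.

Lemma inner_eq (a b eta T tau t1 : R) : 0 < a -> 0 < b -> a != 2 * b -> 0 < eta -> 0 < T ->
  0 < tau ->
  Rintegral (@lebesgue_measure R) setT (fun t2 =>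
      (if `|t1 - t2| <= tau then 1 else 0) *
      p_cond a b eta T t1 * p_cond a b eta T t2) =
  p_cond a b eta T t1 / FT a b T *
    (lcI (sg a b) (Num.min T (t1 + tau)) - lcI (sg a b) (Num.max 0 (t1 - tau))).
Proof.
move=> ha hb hab he hT htau.
have [t1in|t1out] := boolP (t1 \in `[0, T]%classic); last first.
  rewrite p_cond_eq // (negbTE t1out) !mul0r.
  rewrite (@eqRL _ _ (fun _ => 0)) ?Rint0 // => x _; by rewrite mulr0 mul0r.
move: (t1in); rewrite mem_setE in_itv /= => /andP[t10 t1T].
rewrite (@Rint_mkcond `[Num.max 0 (t1 - tau), Num.min T (t1 + tau)] _
   (fun t2 => p_cond a b eta T t1 / FT a b T * lc (sg a b) t2)).
  rewrite RZl; last 2 first.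
  - exact: measurable_itv.
  - exact/cont_int/lc_cont.
  rewrite int_lc ?sg_ne0 //.
  rewrite ge_max !le_min; apply/andP; split; apply/andP; split; lra.
move=> t2.
rewrite [p_cond _ _ _ _ t2]p_cond_eq // !mem_setE !in_itv /= ge_max le_min ler_distl.
have e1 : (t2 - tau <= t1) = (t2 <= t1 + tau) by apply/idP/idP => h; lra.
have e2 : (t1 <= t2 + tau) = (t1 - tau <= t2) by apply/idP/idP => h; lra.
rewrite e1 e2.
have [c1|c1] := leP 0 t2; have [c2|c2] := leP t2 T;
  have [c3|c3] := leP (t1 - tau) t2; have [c4|c4] := leP t2 (t1 + tau);
  rewrite /= ?mul1r ?mulr1 ?mul0r ?mulr0 //; try lra.
Qed.
Lemma lcI_lc (s : seq (R * R)) : lcI s = lc [seq (p.1 / p.2, p.2) | p <- s].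
Proof. by apply: funext => t; rewrite /lc /lcI big_map. Qed.

Lemma contG (s1 s2 : seq (R * R)) (h : R -> R) : continuous (h : R^o -> R^o) ->
  continuous ((fun t => lc s1 t * lcI s2 (h t)) : R^o -> R^o).
Proof.
move=> ch x; apply: continuousM; first exact: lc_cont.
rewrite lcI_lc; apply: continuous_comp; first exact: ch.
exact: lc_cont.
Qed.

Lemma cont_hi (T tau : R) : continuous ((fun t => Num.min T (t + tau)) : R^o -> R^o).
Proof.
move=> x; apply: (@continuous_min _ _ (fun=> T) (fun t => t + tau)).
  exact: cst_continuous.
apply: continuousD; first exact: cvg_id.
exact: cst_continuous.
Qed.

Lemma cont_lo (tau : R) : continuous ((fun t => Num.max 0 (t - tau)) : R^o -> R^o).
Proof.
move=> x; apply: (@continuous_max _ _ (fun=> 0) (fun t => t - tau)).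
  exact: cst_continuous.
apply: continuousB; first exact: cvg_id.
exact: cst_continuous.
Qed.

Lemma split_int (f : R -> R) u x v : u <= x -> x <= v -> continuous (f : R^o -> R^o) ->
  Rintegral (@lebesgue_measure R) `[u, v] f =
  Rintegral (@lebesgue_measure R) `[u, x] f + Rintegral (@lebesgue_measure R) `[x, v] f.
Proof.
move=> ux xv cf.
have := @Rintegral_itvB R f (BLeft u) (BRight v) x (cont_int f u v cf).
rewrite !bnd_simp => /(_ ux xv) h.
rewrite -(@Rintegral_itv_obnd_cbnd R x (BRight v) f); last first.
  apply: (@Rint_sub _ f x v) => //.
  by move=> y /=; rewrite !in_itv /= => /andP[/ltW -> ->].
rewrite -h; ring.
Qed.
Definition al (a b : R) := cc a b / (- a).
Definition be (a b : R) := - cc a b / (- (2 * b)).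
Definition sh (a b d : R) : seq (R * R) :=
  [:: (cc a b * al a b * expR (- a * d), - (2 * a));
      (cc a b * be a b * expR (- (2 * b) * d) - cc a b * al a b * expR (- a * d), - (a + 2 * b));
      (- cc a b * be a b * expR (- (2 * b) * d), - (4 * b))].
Definition scl (a b L : R) : seq (R * R) := [:: (cc a b * L, - a); (- cc a b * L, - (2 * b))].

Lemma sh_eq (a b d t : R) : lc (sg a b) t * lcI (sg a b) (t + d) = lc (sh a b d) t.
Proof.
rewrite /lc /lcI /sh /sg !big_cons !big_nil /=.
have E1 : expR (- a * (t + d)) = expR (- a * d) * expR (- a * t).
  by rewrite -expRD; congr expR; ring.
have E2 : expR (- (2 * b) * (t + d)) = expR (- (2 * b) * d) * expR (- (2 * b) * t).
  by rewrite -expRD; congr expR; ring.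
have E3 : expR (- (2 * a) * t) = expR (- a * t) * expR (- a * t).
  by rewrite -expRD; congr expR; ring.
have E4 : expR (- (a + 2 * b) * t) = expR (- a * t) * expR (- (2 * b) * t).
  by rewrite -expRD; congr expR; ring.
have E5 : expR (- (4 * b) * t) = expR (- (2 * b) * t) * expR (- (2 * b) * t).
  by rewrite -expRD; congr expR; ring.
rewrite E1 E2 E3 E4 E5 /al /be; ring.
Qed.

Lemma scl_eq (a b L t : R) : lc (sg a b) t * L = lc (scl a b L) t.
Proof. by rewrite /lc /scl /sg !big_cons !big_nil /=; ring. Qed.

Lemma sh_ne0 (a b d : R) : 0 < a -> 0 < b -> all (fun p : R * R => p.2 != 0) (sh a b d).
Proof.
move=> ha hb; rewrite /sh /= !oppr_eq0 !gt_eqF //; [lra|lra|lra].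
Qed.

Lemma scl_ne0 (a b L : R) : 0 < a -> 0 < b -> all (fun p : R * R => p.2 != 0) (scl a b L).
Proof.
move=> ha hb; rewrite /scl /= !oppr_eq0 !gt_eqF //; lra.
Qed.
Lemma phph_eq (a b eta T tau : R) : 0 < a -> 0 < b -> a != 2 * b -> 0 < eta -> 0 < T ->
  0 < tau -> tau <= T ->
  p_phph a b eta T tau =
  (FT a b T ^+ 2)^-1 *
  ((lcI (sh a b tau) (T - tau) - lcI (sh a b tau) 0 +
    (lcI (scl a b (lcI (sg a b) T)) T - lcI (scl a b (lcI (sg a b) T)) (T - tau))) -
   (lcI (scl a b (lcI (sg a b) 0)) tau - lcI (scl a b (lcI (sg a b) 0)) 0 +
    (lcI (sh a b (- tau)) T - lcI (sh a b (- tau)) tau))).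
Proof.
move=> ha hb hab he hT htau htT.
have hF := @FT_gt0 a b T ha hb hab hT.
rewrite /p_phph.
rewrite (@eqRL setT _ (fun t1 => p_cond a b eta T t1 / FT a b T *
    (lcI (sg a b) (Num.min T (t1 + tau)) - lcI (sg a b) (Num.max 0 (t1 - tau))))); last first.
  by move=> t1 _; apply: inner_eq.
rewrite (@Rint_mkcond `[0, T] _ (fun t => (FT a b T ^+ 2)^-1 *
    (lc (sg a b) t * lcI (sg a b) (Num.min T (t + tau)) -
     lc (sg a b) t * lcI (sg a b) (Num.max 0 (t - tau))))); last first.
  move=> t; rewrite p_cond_eq //; case: ifP => _; last by rewrite !mul0r.
  by field; rewrite gt_eqF.
have c1 := @contG (sg a b) (sg a b) _ (cont_hi T tau).
have c2 := @contG (sg a b) (sg a b) _ (cont_lo tau).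
rewrite RZl; last 2 first.
- exact: measurable_itv.
- by apply: cont_int => x; exact: (continuousB (c1 x) (c2 x)).
congr (_ * _).
rewrite RB; last 3 first.
- exact: measurable_itv.
- exact: cont_int.
- exact: cont_int.
rewrite (@split_int _ 0 (T - tau) T) //; [|lra|lra].
rewrite (@split_int (fun t => lc (sg a b) t * lcI (sg a b) (Num.max 0 (t - tau))) 0 tau T) //; [|lra].
rewrite (@eqRL `[0, T - tau] _ (lc (sh a b tau))); last first.
  move=> t; rewrite in_setE /= in_itv /= => /andP[t0 tT].
  by rewrite min_r ?sh_eq //; lra.
rewrite (@eqRL `[T - tau, T] _ (lc (scl a b (lcI (sg a b) T)))); last first.
  move=> t; rewrite in_setE /= in_itv /= => /andP[t0 tT].
  by rewrite min_l ?scl_eq //; lra.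
rewrite (@eqRL `[0, tau] _ (lc (scl a b (lcI (sg a b) 0)))); last first.
  move=> t; rewrite in_setE /= in_itv /= => /andP[t0 tT].
  by rewrite max_l ?scl_eq //; lra.
rewrite (@eqRL `[tau, T] _ (lc (sh a b (- tau)))); last first.
  move=> t; rewrite in_setE /= in_itv /= => /andP[t0 tT].
  by rewrite max_r ?sh_eq //; lra.
rewrite !int_lc ?sh_ne0 ?scl_ne0 //; lra.
Qed.
Lemma final (a b eta T tau : R)
  (ha : 0 < a) (hb : 0 < b) (hab : a != 2 * b)
  (heta0 : 0 < eta) (heta1 : eta <= 1)
  (hT : 0 < T) (htau0 : 0 < tau) (htauT : tau <= T) :
  p_phph a b eta T tau * (p_det a b eta T / eta) ^+ 2 =
    a ^+ 2 / (a ^+ 2 - 4 * b ^+ 2) * (1 - expR (- (2 * b * tau)))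
  - 4 * b ^+ 2 / (a ^+ 2 - 4 * b ^+ 2) * (1 - expR (- (a * tau)))
  + a ^+ 2 / (a - 2 * b) ^+ 2 * (1 - expR (2 * b * tau)) * expR (- (4 * b * T))
  + 4 * b ^+ 2 / (a - 2 * b) ^+ 2 * (1 - expR (a * tau)) * expR (- (2 * a * T))
  - 4 * a * b / (a - 2 * b) ^+ 2
      * (1 - (a * expR (2 * b * tau) + 2 * b * expR (a * tau)) / (a + 2 * b))
      * expR (- ((a + 2 * b) * T)).
Proof.
have hF := @FT_gt0 a b T ha hb hab hT.
rewrite phph_eq // p_det_eq ?(ltW hT) //.
rewrite (_ : eta * (lcI (sg a b) T - lcI (sg a b) 0) / eta = FT a b T); last first.
  by rewrite /FT; field; rewrite gt_eqF.
rewrite mulrAC mulVf ?mul1r; last by rewrite expf_neq0 // gt_eqF.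
rewrite /lcI /sh /scl /sg /al /be /cc !big_cons !big_nil /=.
have X0 : expR (- a * tau) = (expR (a * tau))^-1.
  by rewrite -?expRN -?expRD; congr expR; ring.
have X1 : expR (- (2 * a) * (T - tau)) = (expR (a * T))^-1 * (expR (a * T))^-1 * (expR (a * tau)) * (expR (a * tau)).
  by rewrite -?expRN -?expRD; congr expR; ring.
have X2 : expR (- (2 * b) * tau) = (expR (2 * b * tau))^-1.
  by rewrite -?expRN -?expRD; congr expR; ring.
have X3 : expR (- (a + 2 * b) * (T - tau)) = (expR (a * T))^-1 * (expR (2 * b * T))^-1 * (expR (a * tau)) * (expR (2 * b * tau)).
  by rewrite -?expRN -?expRD; congr expR; ring.
have X4 : expR (- (4 * b) * (T - tau)) = (expR (2 * b * T))^-1 * (expR (2 * b * T))^-1 * (expR (2 * b * tau)) * (expR (2 * b * tau)).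
  by rewrite -?expRN -?expRD; congr expR; ring.
have X5 : expR (- a * T) = (expR (a * T))^-1.
  by rewrite -?expRN -?expRD; congr expR; ring.
have X6 : expR (- (2 * b) * T) = (expR (2 * b * T))^-1.
  by rewrite -?expRN -?expRD; congr expR; ring.
have X7 : expR (- a * (T - tau)) = (expR (a * T))^-1 * (expR (a * tau)).
  by rewrite -?expRN -?expRD; congr expR; ring.
have X8 : expR (- (2 * b) * (T - tau)) = (expR (2 * b * T))^-1 * (expR (2 * b * tau)).
  by rewrite -?expRN -?expRD; congr expR; ring.
have X9 : expR (- a * - tau) = (expR (a * tau)).
  by rewrite -?expRN -?expRD; congr expR; ring.
have X10 : expR (- (2 * a) * T) = (expR (a * T))^-1 * (expR (a * T))^-1.
  by rewrite -?expRN -?expRD; congr expR; ring.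
have X11 : expR (- (2 * b) * - tau) = (expR (2 * b * tau)).
  by rewrite -?expRN -?expRD; congr expR; ring.
have X12 : expR (- (a + 2 * b) * T) = (expR (a * T))^-1 * (expR (2 * b * T))^-1.
  by rewrite -?expRN -?expRD; congr expR; ring.
have X13 : expR (- (4 * b) * T) = (expR (2 * b * T))^-1 * (expR (2 * b * T))^-1.
  by rewrite -?expRN -?expRD; congr expR; ring.
have X14 : expR (- (2 * a) * tau) = (expR (a * tau))^-1 * (expR (a * tau))^-1.
  by rewrite -?expRN -?expRD; congr expR; ring.
have X15 : expR (- (a + 2 * b) * tau) = (expR (a * tau))^-1 * (expR (2 * b * tau))^-1.
  by rewrite -?expRN -?expRD; congr expR; ring.
have X16 : expR (- (4 * b) * tau) = (expR (2 * b * tau))^-1 * (expR (2 * b * tau))^-1.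
  by rewrite -?expRN -?expRD; congr expR; ring.
have X17 : expR (- (2 * b * tau)) = (expR (2 * b * tau))^-1.
  by rewrite -?expRN -?expRD; congr expR; ring.
have X18 : expR (- (a * tau)) = (expR (a * tau))^-1.
  by rewrite -?expRN -?expRD; congr expR; ring.
have X19 : expR (- (4 * b * T)) = (expR (2 * b * T))^-1 * (expR (2 * b * T))^-1.
  by rewrite -?expRN -?expRD; congr expR; ring.
have X20 : expR (- (2 * a * T)) = (expR (a * T))^-1 * (expR (a * T))^-1.
  by rewrite -?expRN -?expRD; congr expR; ring.
have X21 : expR (- ((a + 2 * b) * T)) = (expR (a * T))^-1 * (expR (2 * b * T))^-1.
  by rewrite -?expRN -?expRD; congr expR; ring.
rewrite !mulr0 !expR0 X0 X1 X2 X3 X4 X5 X6 X7 X8 X9 X10 X11 X12 X13 X14 X15 X16 X17 X18 X19 X20 X21.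
set u1 := expR (a * T); set u2 := expR (2 * b * T); set v1 := expR (a * tau); set v2 := expR (2 * b * tau).
have hu1 : u1 != 0 by apply: expR_neq0.
have hu2 : u2 != 0 by apply: expR_neq0.
have hv1 : v1 != 0 by apply: expR_neq0.
have hv2 : v2 != 0 by apply: expR_neq0.
have h1 : a != 0 by rewrite gt_eqF.
have h2 : b != 0 by rewrite gt_eqF.
have h3 : 2 * b - a != 0 by rewrite subr_eq0 eq_sym.
have h4 : a - 2 * b != 0 by rewrite subr_eq0.
have h5 : a + 2 * b != 0 by rewrite gt_eqF //; lra.
have h6 : a ^+ 2 - 4 * b ^+ 2 != 0.
  rewrite (_ : a ^+ 2 - 4 * b ^+ 2 = (a - 2 * b) * (a + 2 * b)); last by ring.
  by rewrite mulf_neq0.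
field.
by rewrite hu1 hu2 hv1 hv2 h1 h2 h3 h4 h5 h6.
Qed.
End S.

Theorem theorem6 (R : realType) (a b eta T tau : R)
  (ha : 0 < a) (hb : 0 < b) (hab : a != 2 * b)
  (heta0 : 0 < eta) (heta1 : eta <= 1)
  (hT : 0 < T) (htau0 : 0 < tau) (htauT : tau <= T) :
  p_phph a b eta T tau * (p_det a b eta T / eta) ^+ 2 =
    a ^+ 2 / (a ^+ 2 - 4 * b ^+ 2) * (1 - expR (- (2 * b * tau)))
  - 4 * b ^+ 2 / (a ^+ 2 - 4 * b ^+ 2) * (1 - expR (- (a * tau)))
  + a ^+ 2 / (a - 2 * b) ^+ 2 * (1 - expR (2 * b * tau)) * expR (- (4 * b * T))
  + 4 * b ^+ 2 / (a - 2 * b) ^+ 2 * (1 - expR (a * tau)) * expR (- (2 * a * T))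
  - 4 * a * b / (a - 2 * b) ^+ 2
      * (1 - (a * expR (2 * b * tau) + 2 * b * expR (a * tau)) / (a + 2 * b))
      * expR (- ((a + 2 * b) * T)).
Proof. exact: final. Qed.
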